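(* Let $\mathcal{A}\in\mathbb{C}^{I_{1\ldots N}\times I_{1\ldots N}}$, and let $\mathcal{M},\mathcal{N}\in\mathbb{C}^{I_{1\ldots N}\times I_{1\ldots N}}$ be Hermitian positive definite tensors. Then (i) $0\in\sigma(\mathcal{A})$ if and only if $0\in\sigma(\mathcal{A}^{\dagger}_{\mathcal{M},\mathcal{N}})$; (ii) $0\in W(\mathcal{A})$ if and only if $0\in W(\mathcal{A}^{\dagger}_{\mathcal{M},\mathcal{N}})$.
   Context: Write $I_{1\ldots N}$ for $I_1\times\cdots\times I_N$. Einstein product: $(\mathcal{A}*_N\mathcal{B})_{i_1\ldots i_Nj_1\ldots j_L}=\sum_{k_1,\ldots,k_N}a_{i_1\ldots i_Nk_1\ldots k_N}b_{k_1\ldots k_Nj_1\ldots j_L}$ (also when $\mathcal{B}\in\mathbb{C}^{I_{1\ldots N}}$). $\mathcal{A}^H$ is the conjugate transpose. For $\mathcal{X},\mathcal{Y}\in\mathbb{C}^{I_{1\ldots N}}$, $\langle\mathcal{X},\mathcal{Y}\rangle=\mathcal{Y}^H*_N\mathcal{X}$, $\|\mathcal{X}\|=\langle\mathcal{X},\mathcal{X}\rangle^{1/2}$. $\mathcal{M}$ is Hermitian positive definite if $\mathcal{M}^H=\mathcal{M}$ and $\langle\mathcal{M}*_N\mathcal{X},\mathcal{X}\rangle>0$ for nonzero $\mathcal{X}$. $\sigma(\mathcal{A})$ is the set of $\lambda\in\mathbb{C}$ with $\mathcal{A}*_N\mathcal{X}=\lambda\mathcal{X}$ for some nonzero $\mathcal{X}\in\mathbb{C}^{I_{1\ldots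 N}}$. Numerical range: $W(\mathcal{A})=\{\langle\mathcal{A}*_N\mathcal{X},\mathcal{X}\rangle:\mathcal{X}\in\mathbb{C}^{I_{1\ldots N}},\ \|\mathcal{X}\|=1\}$. Weighted Moore-Penrose inverse $\mathcal{A}^{\dagger}_{\mathcal{M},\mathcal{N}}$: the unique $\mathcal{X}$ with $\mathcal{A}*_N\mathcal{X}*_N\mathcal{A}=\mathcal{A}$, $\mathcal{X}*_N\mathcal{A}*_N\mathcal{X}=\mathcal{X}$, $(\mathcal{M}*_N\mathcal{A}*_N\mathcal{X})^H=\mathcal{M}*_N\mathcal{A}*_N\mathcal{X}$, $(\mathcal{N}*_N\mathcal{X}*_N\mathcal{A})^H=\mathcal{N}*_N\mathcal{X}*_N\mathcal{A}$. *)

(* Defs.v *)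
(* complex numbers are R[i] = complex R over a real closed field R
   (in the statement R : realType, so R[i] is the field of complex numbers). *)
From HB Require Import structures.
From mathcomp Require Import all_boot all_order all_algebra.
From mathcomp Require Import complex.
Set Implicit Arguments. Unset Strict Implicit. Unset Printing Implicit Defensive.
Import Order.TTheory GRing.Theory Num.Theory.
Local Open Scope ring_scope.

(* Multi-index (i_1,...,i_N) with 1 <= i_k <= I_k (0-based here): the finite
   type I_1 x ... x I_N, given the dimension vector I : 'I_N -> nat. *)
Definition idx (N : nat) (I : 'I_N -> nat) : finType :=
  {dffun forall k : 'I_N, 'I_(I k)}.

Section Tensors.
Variables (C : numClosedFieldType) (N : nat) (I : 'I_N -> nat).

Definition tvec := idx I -> C.
Definition tmat := idx I -> idx I -> C.

Definition ein (A B : tmat) : tmat :=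
  fun i j => \sum_(k : idx I) A i k * B k j.
Definition einv (A : tmat) (X : tvec) : tvec :=
  fun i => \sum_(k : idx I) A i k * X k.
Definition tH (A : tmat) : tmat := fun i j => (A j i)^*.
Definition tinner (X Y : tvec) : C := \sum_(i : idx I) (Y i)^* * X i.
Definition tnorm (X : tvec) : C := sqrtC (tinner X X).
Definition tnonzero (X : tvec) : Prop := exists i, X i != 0.

Definition hpd (M : tmat) : Prop :=
  tH M = M /\ forall X : tvec, tnonzero X -> 0 < tinner (einv M X) X.

Definition tspec (A : tmat) (lam : C) : Prop :=
  exists X : tvec, tnonzero X /\ einv A X = (fun i => lam * X i).

Definition tnumrange (A : tmat) (z : C) : Prop :=
  exists X : tvec, tnorm X = 1 /\ tinner (einv A X) X = z.

Definition is_wmpinv (M Nw A X : tmat) : Prop :=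
  [/\ ein (ein A X) A = A,
      ein (ein X A) X = X,
      tH (ein M (ein A X)) = ein M (ein A X)
    & tH (ein Nw (ein X A)) = ein Nw (ein X A)].

End Tensors.

(* Main.v *)
Require Import Defs.
From HB Require Import structures.
From mathcomp Require Import all_boot all_order all_algebra.
From mathcomp Require Import complex.
From mathcomp Require Import reals.
From Stdlib Require Import FunctionalExtensionality.
From mathcomp Require Import ring.
Set Implicit Arguments. Unset Strict Implicit.
Import Order.TTheory GRing.Theory Num.Theory.
Local Open Scope ring_scope.

Section S.
Variables (C : numClosedFieldType) (N : nat) (I : 'I_N -> nat).
Local Notation T := (idx I).
Local Notation n := #|{: T}|.

Lemma tinner_conj (x y : tvec C I) : tinner x y = (tinner y x)^*.
Proof.
rewrite /tinner rmorph_sum; apply: eq_bigr => i _.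
by rewrite rmorphM /= conjCK mulrC.
Qed.

Lemma normalize (B : tmat C I) (v : tvec C I) :
  tnonzero v -> tinner (einv B v) v = 0 -> tnumrange B 0.
Proof.
move=> [i vi] Hv.
set s := tinner v v.
have s_gt0 : 0 < s.
  rewrite /s /tinner (bigD1 i) //=.
  apply: ltr_wpDr.
    by apply: sumr_ge0 => j _; rewrite mulrC mul_conjC_ge0.
  by rewrite mulrC mul_conjC_gt0.
set c := (sqrtC s)^-1.
have c_ge0 : 0 <= c by rewrite invr_ge0 sqrtC_ge0 ltW.
have cc : c^* = c by rewrite geC0_conj.
exists (fun j => c * v j); split.
  rewrite /tnorm /tinner.
  under eq_bigr => j _ do rewrite rmorphM /= cc mulrACA.
  rewrite -mulr_sumr -/(tinner v v) -/s -expr2 /c exprVn sqrtCK mulVf ?sqrtC1 //.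
  by rewrite gt_eqF.
rewrite /tinner.
under eq_bigr => j _ do rewrite rmorphM /= cc /einv.
transitivity (c * c * tinner (einv B v) v); last by rewrite Hv mulr0.
rewrite /tinner mulr_sumr; apply: eq_bigr => j _.
rewrite /einv.
have -> : \sum_(k : T) B j k * (c * v k) = c * \sum_(k : T) B j k * v k.
  by rewrite mulr_sumr; apply: eq_bigr => k _; rewrite mulrCA.
by rewrite mulrACA.
Qed.

Definition mx (A : tmat C I) : 'M[C]_n := \matrix_(i, j) A (enum_val i) (enum_val j).
Definition cv (v : tvec C I) : 'cV[C]_n := \col_i v (enum_val i).

Lemma sum_reindex (F : T -> C) : \sum_(k : T) F k = \sum_(k < n) F (enum_val k).
Proof.
rewrite -big_enum_val /=.
apply: eq_bigl => k; by rewrite inE.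
Qed.

Lemma mx_ein A B : mx (ein A B) = mx A *m mx B.
Proof.
apply/matrixP => i j; rewrite !mxE /ein sum_reindex.
by apply: eq_bigr => k _; rewrite !mxE.
Qed.

Lemma cv_einv A v : cv (einv A v) = mx A *m cv v.
Proof.
apply/matrixP => i j; rewrite !mxE /einv sum_reindex.
by apply: eq_bigr => k _; rewrite !mxE.
Qed.

Lemma cv_pt u w : cv u = cv w -> forall t, u t = w t.
Proof.
move=> H t; have := congr1 (fun M : 'cV[C]_n => M (enum_rank t) 0) H.
by rewrite /= !mxE enum_rankK.
Qed.

Lemma XA1 (A X : tmat C I) : mx A \in unitmx -> ein (ein A X) A = A ->
  mx X *m mx A = 1%:M.
Proof.
move=> Au H.
have := congr1 mx H; rewrite !mx_ein -mulmxA => H2.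
by rewrite -[mx X *m mx A](mulKmx Au) H2 mulVmx.
Qed.

Lemma unit_iff (A X : tmat C I) : ein (ein A X) A = A -> ein (ein X A) X = X ->
  (mx A \in unitmx) = (mx X \in unitmx).
Proof.
move=> H1 H2; apply/idP/idP => U.
  by have := unitmx1 C n; rewrite -(XA1 U H1) unitmx_mul => /andP[].
by have := unitmx1 C n; rewrite -(XA1 U H2) unitmx_mul => /andP[].
Qed.

Lemma spec_iff (A : tmat C I) : tspec A 0 <-> ~~ (mx A \in unitmx).
Proof.
split.
  move=> [v [[i vi] Hv]]; apply/negP => U.
  have : cv v = 0.
    rewrite -(mulKmx U (cv v)) -cv_einv Hv.
    have -> : cv (fun i => 0 * v i) = 0 by apply/matrixP => a b; rewrite !mxE mul0r.
    by rewrite mulmx0.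
  move=> /(congr1 (fun M : 'cV[C]_n => M (enum_rank i) 0)); rewrite /= !mxE enum_rankK.
  by move=> vi0; rewrite vi0 eqxx in vi.
move=> NU.
have : kermx (mx A)^T != 0 by rewrite kermx_eq0 row_free_unit unitmx_tr.
move=> /rowV0Pn [u /sub_kermxP Hu unz].
pose v : tvec C I := fun t => u 0 (enum_rank t).
have cvv : cv v = u^T by apply/matrixP => a b; rewrite !mxE /v enum_valK ord1.
exists v; split.
  case: (pickP (fun j => u 0 j != 0)) => [j uj|H].
    by exists (enum_val j); rewrite /v enum_valK.
  case/negP: unz; apply/eqP/matrixP => a b; rewrite ord1 mxE.
  by have := H b => /negbFE/eqP.
apply: functional_extensionality => t; rewrite mul0r.
apply: (cv_pt (w:=fun _ => 0)); rewrite cv_einv cvv.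
have -> : mx A *m u^T = (u *m (mx A)^T)^T by rewrite trmx_mul trmxK.
by rewrite Hu; apply/matrixP => a b; rewrite !mxE.
Qed.

Lemma one_dir (A X : tmat C I) : ein (ein A X) A = A -> ein (ein X A) X = X ->
  (tspec A 0 -> tspec X 0) /\ (tnumrange A 0 -> tnumrange X 0).
Proof.
move=> H1 H2; have UE := unit_iff H1 H2.
have sp : tspec A 0 -> tspec X 0 by rewrite !spec_iff UE.
split => // -[x [nx Hx]].
case U : (mx A \in unitmx); last first.
  have [v [vnz Hv]] : tspec X 0 by apply: sp; rewrite spec_iff U.
  apply: (normalize vnz); rewrite Hv /tinner big1 // => i _; by rewrite !mul0r mulr0.
have XA := XA1 U H1.
set y := einv A x.
have Xy : forall t, einv X y t = x t.
  by apply: cv_pt; rewrite /y !cv_einv mulmxA XA mul1mx.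
have [i xi] : tnonzero x.
  case: (pickP (fun j => x j != 0)) => [j xj|H]; first by exists j.
  move: nx; rewrite /tnorm /tinner big1 ?sqrtC0.
    by move=> /eqP; rewrite eq_sym oner_eq0.
  by move=> j _; have := H j => /negbFE/eqP ->; rewrite mulr0.
have ynz : tnonzero y.
  case: (pickP (fun j => y j != 0)) => [j yj|H]; first by exists j.
  move: xi; rewrite -Xy /einv big1 ?eqxx //.
  by move=> k _; have := H k => /negbFE/eqP ->; rewrite mulr0.
apply: (normalize ynz).
transitivity (tinner x y); first by apply: eq_bigr => t _; rewrite Xy.
by rewrite tinner_conj Hx conjC0.
Qed.
End S.

Local Open Scope complex_scope.

Theorem theorem6p1 (R : realType) (N : nat) (I : 'I_N -> nat)
  (A M Nw X : tmat R[i] I) :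
  hpd M -> hpd Nw -> is_wmpinv M Nw A X ->
  (tspec A 0 <-> tspec X 0) /\ (tnumrange A 0 <-> tnumrange X 0).
Proof.
move=> _ _ [H1 H2 _ _].
have [a1 a2] := one_dir H1 H2.
have [b1 b2] := one_dir H2 H1.
by split; split.
Qed.
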